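(* Let $(X,S)$ be an aperiodic linearly recurrent subshift with constant $K$ over a finite alphabet $A$, and let $\zeta=\{[a]: a\in A\}$ be the partition into $1$-cylinders. Then for all $x\in X$, $$\frac{1}{K}\leq \underline{\mathcal{R}}_{\zeta}(x)\leq \overline{\mathcal{R}}_{\zeta}(x)\leq K.$$
   Context: $A^{\mathbb Z}$ carries the product topology and the shift $(Sx)_n=x_{n+1}$; a subshift is a closed $S$-invariant $X\subseteq A^{\mathbb Z}$. For $x\in A^{\mathbb Z}$, $L(x)$ is the set of finite words occurring in $x$, and $L(X)=\bigcup_{x\in X}L(x)$. For $u\in L(x)$, a word $w$ is a return word to $u$ (in $x$) if $wu\in L(x)$, $u$ is a prefix of $wu$, and $u$ occurs exactly twice in $wu$. A sequence $x$ is uniformly recurrent if every $u\in L(x)$ occurs infinitely often in $x$ and for each $u\in L(x)$ there is $K_u$ with $|w|\leq K_u|u|$ for every return word $w$ to $u$; $x$ is linearly recurrent with constant $K$ if it is uniformly recurrent and $|w|\leq K|u|$ for all $u\in L(x)$ and all return words $w$ to $u$. A subshift is linearly recurrent with constant $K$ if it is minimal and contains a linearly recurrent sequence with constant $K$; aperiodic means it contains no periodic point. Cylinders: $[u]=\{x\in X: x_0\cdots x_{|u|-1}=u\}$. For measurable $U\subseteq X$, $\tau(U)=\inf\{k\geq1: S^kU\cap U\neq\emptyset\}$; $\zeta_n=\zeta\vee S^{-1}\zeta\vee\cdots\vee S^{-n+1}\zeta$, $\zeta_n(x)$ is the atom containing $x$, $\underline{\mathcal{R}}_{\zeta}(x)=\liminf_n\tau(\zeta_n(x))/n$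 and $\overline{\mathcal{R}}_{\zeta}(x)=\limsup_n\tau(\zeta_n(x))/n$. *)

(* Defs.v *)
From HB Require Import structures.
From mathcomp Require Import all_boot all_order all_algebra.
From mathcomp Require Import all_classical all_reals all_analysis.
Set Implicit Arguments. Unset Strict Implicit. Unset Printing Implicit Defensive.
Import Order.TTheory GRing.Theory Num.Theory.
Local Open Scope classical_set_scope.
Local Open Scope ring_scope.

Definition fullshift (A : finType) : Type :=
  prod_topology (fun _ : int => discrete_topology A).

Section Shift.
Variable A : finType.
Local Notation AZ := (fullshift A).

Definition shift (x : AZ) : AZ := fun n => x (n + 1)%R.

Definition shift_invariant (X : set AZ) : Prop := shift @` X `<=` X.

Definition subshift (X : set AZ) : Prop := closed X /\ shift_invariant X.

Definition minimal_subshift (X : set AZ) : Prop :=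
  subshift X /\ X !=set0 /\
  forall Y : set AZ, Y `<=` X -> closed Y -> shift_invariant Y -> Y !=set0 -> Y = X.

Definition periodic (x : AZ) : Prop := exists p : nat, (0 < p)%N /\ iter p shift x = x.

Definition aperiodic (X : set AZ) : Prop := forall x, X x -> ~ periodic x.

Definition occurs_at (x : AZ) (u : seq A) (i : int) : Prop :=
  forall j : nat, (j < size u)%N -> x (i + j%:Z)%R = nth (x i) u j.

Definition lang (x : AZ) : set (seq A) := [set u | exists i, occurs_at x u i].

Definition occ (u v : seq A) : nat :=
  count (fun i => take (size u) (drop i v) == u) (iota 0 (size v - size u).+1).

Definition return_word (x : AZ) (u w : seq A) : Prop :=
  lang x (w ++ u) /\ prefix u (w ++ u) /\ occ u (w ++ u) = 2%N.

Definition occurs_infinitely_often (x : AZ) (u : seq A) : Prop :=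
  ~ finite_set [set i | occurs_at x u i].

Definition uniformly_recurrent (x : AZ) : Prop :=
  (forall u, lang x u -> u != [::] -> occurs_infinitely_often x u) /\
  (forall u, lang x u -> u != [::] -> exists Ku : nat,
      forall w, return_word x u w -> (size w <= Ku * size u)%N).

Definition linearly_recurrent_seq (R : realType) (K : R) (x : AZ) : Prop :=
  uniformly_recurrent x /\
  forall u w, lang x u -> u != [::] -> return_word x u w ->
     (size w)%:R <= K * (size u)%:R.

Definition linearly_recurrent_subshift (R : realType) (K : R) (X : set AZ) : Prop :=
  minimal_subshift X /\ exists x, X x /\ linearly_recurrent_seq K x.

Definition return_time (R : realType) (U : set AZ) : \bar R :=
  ereal_inf [set (k%:R)%:E | k in [set k : nat |
     (0 < k)%N /\ (iter k shift @` U) `&` U !=set0]].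

(** atom of zeta_n = zeta v S^-1 zeta v ... v S^-(n-1) zeta (zeta the
    partition of X into 1-cylinders) containing x *)
Definition atom (X : set AZ) (n : nat) (x : AZ) : set AZ :=
  [set y | X y /\ forall i : nat, (i < n)%N -> y i%:Z = x i%:Z].

(** the sequence tau(zeta_n(x))/n, n >= 1 (indexed from 0 via n.+1) *)
Definition rec_ratio (R : realType) (X : set AZ) (x : AZ) : nat -> \bar R :=
  fun n => (return_time R (atom X n.+1 x) * ((n.+1)%:R^-1)%:E)%E.

End Shift.

(* Main.v *)
Require Import Defs.
From HB Require Import structures.
From mathcomp Require Import all_boot all_order all_algebra.
From mathcomp Require Import all_classical all_reals all_analysis.
From mathcomp Require Import zify.
Set Implicit Arguments. Unset Strict Implicit. Unset Printing Implicit Defensive.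
Import Order.TTheory GRing.Theory Num.Theory.
Local Open Scope classical_set_scope.
Local Open Scope ring_scope.

Section Words.
Variable A : finType.
Local Notation AZ := (fullshift A).

Definition word (x : AZ) (i : int) (n : nat) : seq A :=
  mkseq (fun t => x (i + t%:Z)) n.

Lemma size_word x i n : size (word x i n) = n.
Proof. by rewrite size_mkseq. Qed.

Lemma nth_word x i n t d : (t < n)%N -> nth d (word x i n) t = x (i + t%:Z).
Proof. by move=> tn; rewrite nth_mkseq. Qed.

Lemma occursP x u i : occurs_at x u i <-> word x i (size u) = u.
Proof.
split.
  move=> h; apply: (@eq_from_nth _ (x i)); first by rewrite size_word.
  by move=> t; rewrite size_word => tu; rewrite nth_word // h.
move=> <- t; rewrite size_word => tn; by rewrite nth_word.
Qed.

Lemma occurs_word x i n : occurs_at x (word x i n) i.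
Proof. by apply/occursP; rewrite size_word. Qed.

Lemma word_cat x i m n : word x i (m + n) = word x i m ++ word x (i + m%:Z) n.
Proof.
rewrite /word /mkseq iotaD map_cat; congr (_ ++ _).
rewrite add0n; have -> : iota m n = map (addn m) (iota 0 n) by rewrite -iotaDl addn0.
rewrite -map_comp; apply: eq_map => t /=.
by rewrite PoszD addrA.
Qed.

Lemma drop_word x i n k : (k <= n)%N -> drop k (word x i n) = word x (i + k%:Z) (n - k).
Proof.
move=> kn; rewrite -{1}(subnKC kn) word_cat drop_size_cat //.
by rewrite size_word.
Qed.

Lemma take_word x i n k : (k <= n)%N -> take k (word x i n) = word x i k.
Proof.
move=> kn; rewrite -{1}(subnKC kn) word_cat take_size_cat //.
by rewrite size_word.
Qed.

Lemma iter_shift k (y : AZ) (t : int) : iter k (@Defs.shift A) y t = y (t + k%:Z).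
Proof.
elim: k y t => [|k IH] y t /=; first by rewrite addr0.
by rewrite /Defs.shift IH -addrA; congr (y (_ + _)); lia.
Qed.

End Words.
Lemma gap (P : int -> Prop) (d : nat) : forall a0 b0 i : int,
  b0 - a0 <= d%:Z -> P a0 -> P b0 -> a0 <= i < b0 ->
  exists a c, [/\ P a, P c, a <= i < c & forall e, a < e < c -> ~ P e].
Proof.
elim: d => [|d IH] a0 b0 i hd Pa Pb hi.
  exfalso; move: hi => /andP[h1 h2]; lia.
have [[e [/andP[ae eb] Pe]]|none] :=
  pselect (exists e, a0 < e < b0 /\ P e).
  have [ei|ie] := lerP e i.
    apply: (IH e b0 i) => //; [lia|]; apply/andP; split => //; lia.
  apply: (IH a0 e i) => //; [lia|]; apply/andP; split; lia.
exists a0, b0; split => // e he Pe; apply: none; exists e; split => //.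
Qed.

Section Ret.
Variable A : finType.
Local Notation AZ := (fullshift A).

Lemma ret (x : AZ) (z : seq A) (a c : int) : z != [::] -> a < c ->
  occurs_at x z a -> occurs_at x z c ->
  (forall e, a < e < c -> ~ occurs_at x z e) ->
  return_word x z (word x a `|c - a|%N) /\ size (word x a `|c - a|%N) = `|c - a|%N.
Proof.
move=> zn ac oa oc none; split; last by rewrite size_word.
set L := `|c - a|%N.
have cE : c = a + L%:Z by rewrite /L; lia.
have wz : word x a L ++ z = word x a (L + size z).
  by rewrite word_cat -cE; move/occursP: oc => ->.
rewrite /return_word wz; split; first by exists a; exact: occurs_word.
split.
  rewrite prefixE take_word ?leq_addl //; by move/occursP: oa => ->.
rewrite /occ size_word addnK.
have L0 : (0 < L)%N by rewrite /L; lia.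
rewrite (@eq_in_count _ _ (fun i => (i == 0)%N || (i == L))); last first.
  move=> i; rewrite mem_iota add0n ltnS => /andP[_ iL].
  rewrite drop_word ?(leq_trans iL) ?leq_addr // take_word; last by lia.
  have [->|i0] := eqVneq i 0%N.
    by rewrite addr0; move/occursP: oa => ->; rewrite eqxx.
  have [iLe|iL'] := eqVneq i L.
    by rewrite iLe -cE; move/occursP: oc => ->; rewrite eqxx orbT.
  rewrite /=; apply/negbTE/eqP => h; apply: (none (a + i%:Z)); first by lia.
  by apply/occursP.
clearbody L; case: L L0 {cE wz} => // L' _.
rewrite (_ : L'.+2 = (1 + L') + 1)%N; last by lia.
rewrite !iotaD !count_cat.
rewrite (@eq_in_count _ _ pred0 (iota (0 + 1) L')); last first.
  move=> i; rewrite mem_iota => /andP[h1 h2] /=; apply/negbTE; lia.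
rewrite count_pred0 /= add0n eqxx; lia.
Qed.
End Ret.
Section Topo.
Variable A : finType.
Local Notation AZ := (fullshift A).

Lemma coord_nbhs (x : AZ) (i : int) : nbhs x [set y : AZ | y i = x i].
Proof.
have := @proj_continuous int (fun _ => discrete_topology A) i x.
move=> /(_ [set x i]) h.
have := h (discrete_set1 _).
by [].
Qed.

Lemma cyl_nbhs (x : AZ) (a : int) (m : nat) :
  nbhs x [set y : AZ | forall t, (t < m)%N -> y (a + t%:Z) = x (a + t%:Z)].
Proof.
elim: m => [|m IH].
  by apply: filterS (@filterT _ (nbhs x) _) => y _ t.
apply: filterS (filterI IH (coord_nbhs x (a + m%:Z))) => y [h1 h2] t.
rewrite ltnS leq_eqVlt => /orP[/eqP ->|tm] //; exact: h1.
Qed.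

Lemma iterX (X : set AZ) : shift_invariant X -> forall k y, X y -> X (iter k (@Defs.shift A) y).
Proof.
move=> inv; elim => [|k IH] y Xy //=; apply: inv; exists (iter k (@Defs.shift A) y) => //.
exact: IH.
Qed.

Lemma minimal_occ (X : set AZ) (x0 : AZ) : minimal_subshift X -> X x0 ->
  forall x, X x -> forall (a : int) (m N : nat), exists k : int,
    N%:Z <= k /\ forall t, (t < m)%N -> x0 (k + a + t%:Z) = x (a + t%:Z).
Proof.
move=> [[clX invX] [_ minX]] Xx0.
move=> x Xx a m N.
pose D := [set y : AZ | forall a m, exists k : int, N%:Z <= k /\
   forall t, (t < m)%N -> x0 (k + a + t%:Z) = y (a + t%:Z)].
have YX : X `&` D = X.
  apply: minX.
  - by move=> y [].
  - apply: closedI => //.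
    move=> y cly a' m'.
    have [y' [Dy' cy']] := cly _ (cyl_nbhs y a' m').
    have [k [Nk hk]] := Dy' a' m'.
    by exists k; split => // t tm; rewrite hk // cy'.
  - move=> _ [y [Xy Dy] <-]; split; first by apply: invX; exists y.
    move=> a' m'; have [k [Nk hk]] := Dy (a' + 1) m'.
    exists (k + 1); split; first by lia.
    move=> t tm; rewrite /Defs.shift.
    have -> : k + 1 + a' + t%:Z = k + (a' + 1) + t%:Z by lia.
    rewrite hk //; congr y; lia.
  - exists (iter N (@Defs.shift A) x0); split; first exact: iterX.
    move=> a' m'; exists N%:Z; split => // t tm.
    rewrite iter_shift; congr x0; lia.
have : (X `&` D) x by rewrite YX.
by move=> [_ Dx]; apply: Dx.
Qed.
End Topo.
Section Main.
Variables (R : realType) (A : finType) (K : R) (X : set (fullshift A)) (x0 : fullshift A).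
Local Notation AZ := (fullshift A).
Hypothesis minX : minimal_subshift X.
Hypothesis Xx0 : X x0.
Hypothesis LR : linearly_recurrent_seq K x0.

Lemma occ_eq (x y : AZ) j m c : occurs_at x (word y j m) c ->
  forall t, (t < m)%N -> x (c + t%:Z) = y (j + t%:Z).
Proof. by move=> h t tm; rewrite h ?size_word // nth_word. Qed.

Lemma far_occ x u : X x -> lang x u -> forall N : int, exists i, N <= i /\ occurs_at x0 u i.
Proof.
move=> Xx [a oa] N.
have [k [Nk hk]] := minimal_occ minX Xx0 Xx a (size u) `|N - a|%N.
exists (k + a); split; first by lia.
move=> t tu; rewrite hk // oa //; exact: set_nth_default.
Qed.

Lemma upper x n : X x -> (0 < n)%N -> exists k : nat, (0 < k)%N /\
  (k%:R <= K * n%:R) /\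
  ((iter k (@Defs.shift A) @` atom X n x) `&` atom X n x !=set0).
Proof.
move=> Xx n0.
set u := word x 0 n.
have lu : lang x u by exists 0; exact: occurs_word.
have [i [i0 oi]] := far_occ Xx lu 0.
have [b [ib ob]] := far_occ Xx lu (i + 1).
have [a [c [Pa Pc /andP[ai ic] cons]]] :=
  @gap (occurs_at x0 u) `|b - i|%N i b i ltac:(lia) oi ob ltac:(apply/andP; split; lia).
have ae : a = i.
  apply/eqP; rewrite eq_le ai /=; rewrite leNgt; apply/negP => lt.
  by apply: (cons i) => //; apply/andP.
subst a.
have un : u != [::] by rewrite -size_eq0 size_word -lt0n.
have [rw sw] := ret un ic Pa Pc cons.
have := LR.2 _ _ (ex_intro _ i Pa) un rw.
rewrite sw size_word => Kb.
exists `|c - i|%N; split; first by lia.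
split => //.
have ipos : i = `|i|%N%:Z by lia.
exists (iter `|c - i|%N (@Defs.shift A) (iter `|i|%N (@Defs.shift A) x0)); split.
  exists (iter `|i|%N (@Defs.shift A) x0) => //.
  split; first exact: iterX minX.1.2 _ _ Xx0.
  move=> t tn; rewrite iter_shift -ipos addrC.
  by rewrite (occ_eq oi) // add0r.
split; first by apply: iterX minX.1.2 _ _ _; apply: iterX minX.1.2 _ _ Xx0.
move=> t tn; rewrite !iter_shift -ipos.
have -> : t%:Z + `|c - i|%N%:Z + i = c + t%:Z by lia.
by rewrite (occ_eq Pc) // add0r.
Qed.

Hypothesis aper : aperiodic X.

Lemma lower x n k : (0 < n)%N -> (0 < k)%N ->
  ((iter k (@Defs.shift A) @` atom X n x) `&` atom X n x !=set0) ->
  ~ (K * k.+1%:R <= n%:R).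
Proof.
move=> n0 k0 [_ [[y [Xy hy] <-] [_ hky]]] Kn.
have yper : forall s : nat, (s < n)%N -> y s%:Z = y (s + k)%N%:Z.
  move=> s sn; rewrite hy // -hky // iter_shift; congr y; lia.
suff per : forall j : int, x0 (j + k%:Z) = x0 j.
  apply: (aper Xx0); exists k; split => //.
  apply: functional_extensionality_dep => t; by rewrite iter_shift per.
move=> j.
set z := word x0 j k.+1.
set v := word y 0 (n + k).
have lv : lang y v by exists 0; exact: occurs_word.
have [i [ji oi]] := far_occ Xy lv j.
have lz : lang x0 z by exists j; exact: occurs_word.
have [b [ib ob]] := far_occ Xx0 lz i.
have vE : forall t : nat, (t < n + k)%N -> x0 (i + t%:Z) = y t%:Z.
  by move=> t tn; rewrite (occ_eq oi) // add0r.
have zE : forall c, occurs_at x0 z c -> forall t : nat, (t <= k)%N ->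
    x0 (c + t%:Z) = x0 (j + t%:Z).
  by move=> c oc t tk; rewrite (occ_eq oc).
have [Pi|nPi] := pselect (occurs_at x0 z i).
  have e0 := zE i Pi 0%N isT; have ek := zE i Pi k (leqnn k).
  rewrite !addr0 in e0; rewrite -ek -e0.
  have h0 := vE 0%N ltac:(lia); rewrite addr0 in h0.
  rewrite h0 (vE k); last by lia.
  by rewrite (yper 0%N n0).
have ilb : i < b.
  rewrite lt_neqAle ib andbT; apply/eqP => eib; apply: nPi; by rewrite eib.
have oj : occurs_at x0 z j by exact: occurs_word.
have [a [c [Pa Pc /andP[ai ic] cons]]] :=
  @gap (occurs_at x0 z) `|b - j|%N j b i ltac:(lia) oj ob
    ltac:(apply/andP; split; lia).
have ai' : a < i.
  rewrite lt_neqAle ai andbT; apply/eqP => eai; apply: nPi; by rewrite -eai.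
have zn : z != [::] by rewrite -size_eq0 size_word.
have [rw sw] := ret zn (lt_trans ai' ic) Pa Pc cons.
have := LR.2 _ _ (ex_intro _ a Pa) zn rw.
rewrite sw size_word => Kb.
have can : (`|c - a|%N <= n)%N.
  by rewrite -(ler_nat R); apply: le_trans Kb Kn.
set s := `|c - i|%N.
have cs : c = i + s%:Z by rewrite /s; lia.
have sn : (s < n)%N by rewrite /s; lia.
have e0 := zE c Pc 0%N isT; have ek := zE c Pc k (leqnn k).
rewrite !addr0 in e0; rewrite -ek -e0 cs -addrA -PoszD.
rewrite (vE s); last by lia.
rewrite (vE (s + k)%N); last by lia.
by rewrite (yper s sn).
Qed.
End Main.
Section Final.
Variables (R : realType) (A : finType) (K : R) (X : set (fullshift A)).

Lemma rt_ge0 (U : set (fullshift A)) : (0 <= return_time R U)%E.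
Proof.
apply: le_ereal_inf_tmp => _ [k _ <-]; by rewrite lee_fin.
Qed.

Lemma harm_cvg : (fun n : nat => ((K^-1 - n.+1%:R^-1)%:E : \bar R)) @ \oo --> (K^-1)%:E.
Proof.
apply: cvg_EFin; first exact: nearW.
have h : (fun n : nat => K^-1 - harmonic n) @ \oo --> K^-1 - 0.
  apply: cvgB; [exact: cvg_cst | exact: cvg_harmonic].
rewrite subr0 in h; exact: h.
Qed.
End Final.
Theorem proposition2p2 (R : realType) (A : finType) (K : R)
  (X : set (fullshift A)) :
  linearly_recurrent_subshift K X -> aperiodic X ->
  forall x, X x ->
    ((K^-1)%:E <= limn_einf (rec_ratio R X x))%E /\
    (limn_einf (rec_ratio R X x) <= limn_esup (rec_ratio R X x))%E /\
    (limn_esup (rec_ratio R X x) <= K%:E)%E.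
Proof.
move=> [minX [x0 [Xx0 LRx0]]] aper x Xx.
set u := rec_ratio R X x.
have ub : forall n, (u n <= K%:E)%E.
  move=> n; rewrite /u /rec_ratio.
  have [k [k0 [kK kin]]] := upper minX Xx0 LRx0 Xx (ltn0Sn n).
  have t0 := rt_ge0 R (atom X n.+1 x).
  have tk : (return_time R (atom X n.+1 x) <= (k%:R)%:E)%E.
    by apply: ereal_inf_lbound; exists k.
  move: t0 tk; case: (return_time R (atom X n.+1 x)) => [r| |] //=.
  rewrite !lee_fin => r0 rk.
  rewrite ler_pdivrMr ?ltr0n //.
  exact: le_trans rk kK.
have lb : forall n, (((K^-1 - n.+1%:R^-1)%:E : \bar R) <= u n)%E.
  move=> n; rewrite /u /rec_ratio.
  have tl : (((n.+1%:R * K^-1 - 1)%:E : \bar R) <= return_time R (atom X n.+1 x))%E.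
    apply: le_ereal_inf_tmp => _ [k [k0 kin] <-]; rewrite lee_fin.
    have nK := lower minX Xx0 LRx0 aper (ltn0Sn n) k0 kin.
    have [Kp|Kn] := ltrP 0 K.
      rewrite lerBlDr ler_pdivrMr //.
      apply/ltW; rewrite ltNge; apply/negP => h; apply: nK.
      by rewrite mulrC -natr1.
    have : K^-1 <= 0 by rewrite invr_le0.
    move=> Ki; apply: (@le_trans _ _ 0); last by rewrite ler0n.
    rewrite subr_le0; apply: (@le_trans _ _ 0); last by [].
    by rewrite mulr_ge0_le0 // ler0n.
  move: tl; case: (return_time R (atom X n.+1 x)) => [r| |] //=.
    rewrite !lee_fin => rl.
    have i0 : 0 <= n.+1%:R^-1 :> R by rewrite invr_ge0 ler0n.
    apply: le_trans (ler_wpM2r i0 rl).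
    by rewrite mulrBl mulrAC mulfV ?pnatr_eq0 // mul1r div1r.
  move=> _; rewrite mulyr gtr0_sg ?invr_gt0 ?ltr0n // mul1e; exact: leey.
split.
  rewrite limn_einf_lim (cvg_lim _ (@cvg_einfs_sup R u)) //.
  apply: (lee_cvg_to (@harm_cvg R K) (@cvg_einfs_sup R u)).
  apply: nearW => n.
  apply: le_ereal_inf_tmp => _ [m /= nm <-].
  apply: le_trans (lb m); rewrite lee_fin lerD2l lerN2.
  by rewrite lef_pV2 ?posrE ?ltr0n // ler_nat.
split; first exact: limn_einf_sup.
rewrite limn_esup_lim; apply: lime_le; first exact: is_cvg_esups.
apply: nearW => n; apply: ge_ereal_sup => _ [m _ <-]; exact: ub.
Qed.
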